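(* Fix $0<R<1$, $\varepsilon>0$ with $1-R-\varepsilon>0$, a positive integer $\ell$, and let $q$ be a prime power with $q\ge \max\left(\ell^{\frac{8R}{\varepsilon}+6},\ \ell\cdot 2^{4/\varepsilon}\right)$. Let $\mathcal{C}\subseteq \mathbb{F}_q^n$ be a random linear code of rate $R$. Then with probability at least $1-2q^{-\varepsilon n/8}$, $\mathcal{C}$ is $\left(1-R-\varepsilon,\ \ell,\ L\right)$-list-recoverable with $L\le \left(\frac{2\ell}{\varepsilon}\right)^{2\ell/\varepsilon}$.
   Context: A random linear code (RLC) of rate $R$ in $\mathbb{F}_q^n$ is the column span of a generator matrix $\mathbf{G}\in\mathbb{F}_q^{n\times Rn}$ whose entries are independent and uniformly random elements of $\mathbb{F}_q$ (here $Rn$ is an integer). For $x\in\mathbb{F}_q^n$ and sets $S_1,\dots,S_n\subseteq\mathbb{F}_q$, the agreement set is $\{i\in[n]: x[i]\in S_i\}$. The $\rho$-radius $\ell$-list-recovery ball $B(\rho,S_1\times\cdots\times S_n)$, for sets $S_i$ of size $\ell$, is the set of $x\in\mathbb{F}_q^n$ whose agreement set with $S_1,\dots,S_n$ has size at least $(1-\rho)n$. A code $\mathcal{C}\subseteq\mathbb{F}_q^n$ is $(\rho,\ell,L)$-list-recoverable if every $\rho$-radius $\ell$-list-recovery ball contains at most $L$ codewords of $\mathcal{C}$. *)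

(* Defs.v *)
From HB Require Import structures.
From mathcomp Require Import all_boot all_order all_algebra all_field.
From mathcomp Require Import reals exp.
Set Implicit Arguments. Unset Strict Implicit. Unset Printing Implicit Defensive.
Import Order.TTheory GRing.Theory Num.Theory.
Local Open Scope ring_scope.

Section ListRecovery.
Variables (R : realType) (F : finFieldType) (n : nat).

Definition col_span_code k (G : 'M[F]_(n, k)) : {set 'cV[F]_n} :=
  [set G *m m | m : 'cV[F]_k].

Definition agreement (S : {ffun 'I_n -> {set F}}) (x : 'cV[F]_n) : {set 'I_n} :=
  [set i | x i 0 \in S i].

Definition in_lr_ball (rho : R) (S : {ffun 'I_n -> {set F}}) (x : 'cV[F]_n) : bool :=
  (1 - rho) * n%:R <= (#|agreement S x|)%:R.

Definition list_recoverable (rho : R) (l : nat) (L : R) (C : {set 'cV[F]_n}) : bool :=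
  [forall S : {ffun 'I_n -> {set F}},
     [forall i, #|S i| == l] ==>
     ((#|[set x in C | in_lr_ball rho S x]|)%:R <= L)].

End ListRecovery.

(* Main.v *)
Require Import Defs.
From HB Require Import structures.
From mathcomp Require Import all_boot all_order all_algebra all_field.
From mathcomp Require Import reals exp.
From mathcomp Require Import sequences.
From mathcomp Require Import ring lra.
Set Implicit Arguments. Unset Strict Implicit. Unset Printing Implicit Defensive.
Import Order.TTheory GRing.Theory Num.Theory.
Local Open Scope ring_scope.

Lemma card_bigcup_le (T I : finType) (P : {pred I}) (A : I -> {set T}) (B : {set T}) :
  (forall x, x \in B -> exists2 i, i \in P & x \in A i) ->
  (#|B| <= \sum_(i in P) #|A i|)%N.
Proof.
move=> HB.
have E i : #|A i| = (\sum_x (x \in A i : nat))%N.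
  by rewrite -sum1_card big_mkcond; apply: eq_bigr => x _; case: (x \in A i).
under eq_bigr => i _ do rewrite E.
rewrite exchange_big /= -sum1_card.
rewrite [X in (_ <= X)%N](bigID (mem B)) /= -[X in (X <= _)%N]addn0.
apply: leq_add; last exact: leq0n.
apply: leq_sum => x /HB [i Pi xA].
by rewrite (bigD1 i) //= xA.
Qed.

Section Lin.
Variable F : finFieldType.
Local Notation q := #|F|.
Lemma q_gt0 : (0 < q)%N. Proof. exact: ltnW (card_finNzRing_gt1 F). Qed.

Lemma card_submx n k m (K : 'M[F]_(m, k)) :
  #|[set H : 'M[F]_(n, k) | (H <= K)%MS]| = (q ^ (n * \rank K))%N.
Proof.
rewrite -card_mx.
have inj := row_free_inj (row_base_free K).
rewrite -(card_imset _ (@inj n)).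
apply: eq_card => H; rewrite inE; apply/idP/imsetP.
  rewrite -(eq_row_base K) => /submxP [B ->]; by exists B.
move=> [B _ ->]; rewrite -(eq_row_base K); exact: submxMl.
Qed.

Lemma card_solve d k n (M : 'M[F]_(d, k)) (T : 'M[F]_(d, n)) :
  (#|[set H : 'M[F]_(k, n) | M *m H == T]| <= q ^ (n * (k - \rank M)))%N.
Proof.
case: (set_0Vmem [set H : 'M[F]_(k, n) | M *m H == T]) => [-> | [H0]].
  by rewrite cards0.
rewrite inE => /eqP H0T.
rewrite -mxrank_tr -mxrank_ker -card_submx.
have inj : injective (fun H : 'M[F]_(k, n) => (H - H0)^T).
  by move=> H1 H2 /trmx_inj /addIr.
rewrite -(card_imset _ inj); apply: subset_leq_card.
apply/subsetP => x /imsetP [H]; rewrite inE => /eqP HT ->.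
rewrite inE; apply/sub_kermxP.
by rewrite -trmx_mul mulmxBr HT H0T subrr trmx0.
Qed.

Lemma card_contain d k n (T : 'M[F]_(d, n)) : row_free T ->
  (#|[set H : 'M[F]_(k, n) | (T <= H)%MS]| <= q ^ (d * k) * q ^ (n * (k - d)))%N.
Proof.
move=> fT.
set P := [set M : 'M[F]_(d,k) | [exists H : 'M[F]_(k,n), M *m H == T]].
apply: (@leq_trans (\sum_(M in P) #|[set H : 'M[F]_(k, n) | M *m H == T]|)).
  apply: card_bigcup_le => H; rewrite inE => /submxP [M HM].
  exists M; rewrite inE; last by rewrite HM.
  by apply/existsP; exists H; rewrite HM.
apply: (@leq_trans (\sum_(M in P) q ^ (n * (k - d)))%N).
  apply: leq_sum => M; rewrite !inE /= => /existsP [H /eqP MH].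
  apply: leq_trans (card_solve _ _) _.
  apply: leq_pexp2l; first exact: ltnW (card_finNzRing_gt1 F).
  rewrite leq_mul2l leq_sub2l ?orbT //.
  by have := mxrankM_maxl M H; rewrite MH (eqP fT).
rewrite sum_nat_const leq_mul2r; apply/orP; right.
by rewrite -card_mx; apply: max_card.
Qed.
End Lin.

Section Affine.
Variables (R : realType) (F : finFieldType) (n l : nat) (S : 'I_n -> {set F}).
Hypothesis HS : forall i, (#|S i| <= l)%N.
Definition agr (p : 'rV[F]_n) := [set i | p 0 i \in S i].
Definition zeros (p : 'rV[F]_n) := [set i : 'I_n | p 0 i == 0].
Variables (t z0 g : R) (m0 : nat) (U0 : 'M[F]_(m0, n)).
Hypothesis Hdist : forall v : 'rV[F]_n, (v <= U0)%MS -> v != 0 -> (#|zeros v|)%:R < z0.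
Hypothesis Hg : 0 < g.
Hypothesis Hgap : z0 + g <= t.
Let Dr := (n * l)%:R / g.
Hypothesis HD : 1 <= Dr.

Definition aset m (U : 'M[F]_(m, n)) (y : 'rV[F]_n) :=
  [set p : 'rV[F]_n | ((p - y) <= U)%MS && (t <= (#|agr p|)%:R)].

Lemma affine_bound r : forall m (U : 'M[F]_(m, n)), \rank U = r -> (U <= U0)%MS ->
  forall y, (#|aset U y|)%:R <= Dr ^+ r.
Proof.
elim/ltn_ind: r => r IH m U rU sU y.
case: (posnP r) => [r0 | rpos].
  have U0' : U = 0 by apply/eqP; rewrite -mxrank_eq0 rU r0.
  rewrite r0 expr0 -[1 : R]/(1%:R) ler_nat.
  rewrite -[X in (_ <= X)%N](cards1 y); apply: subset_leq_card; apply/subsetP => p.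
  rewrite !inE => /andP [H _]; move: H; rewrite U0' => /submx0null /eqP; rewrite subr_eq0 => /eqP ->; exact: eqxx.
have [j Hj] : exists j, row j U != 0.
  case: (pickP (fun j => row j U != 0)) => [j Hj | H0]; first by exists j.
  exfalso; move: rpos; rewrite -rU lt0n mxrank_eq0 => /eqP; apply.
  apply/matrixP => a b; have := H0 a; rewrite /= => /negbFE /eqP /rowP /(_ b).
  by rewrite !mxE.
set Zall := [set i : 'I_n | col i U == 0].
have HZ : (#|Zall|)%:R < z0.
  apply: le_lt_trans (Hdist (submx_trans (row_sub j U) sU) Hj).
  rewrite ler_nat; apply: subset_leq_card; apply/subsetP => i; rewrite !inE.
  by move=> /eqP /matrixP /(_ j 0); rewrite !mxE => ->.
set P := aset U y.
have HDge0 : 0 <= Dr by apply: le_trans HD; exact: ler01.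
have Hp : forall p, p \in P -> g <= (#|agr p :\: Zall|)%:R.
  move=> p; rewrite inE => /andP [_ Ht].
  have H1 : (#|agr p| <= #|agr p :\: Zall| + #|Zall|)%N.
    rewrite -(cardsID Zall (agr p)) addnC leq_add2l.
    apply: subset_leq_card; exact: subsetIr.
  have H2 : (#|agr p|)%:R <= (#|agr p :\: Zall|)%:R + (#|Zall|)%:R :> R.
    by rewrite -natrD ler_nat.
  move: Ht H2 HZ Hgap; move: (#|agr p|%:R : R) (#|agr p :\: Zall|%:R : R) (#|Zall|%:R : R) => a b c; lra.
have Hsum : g * (#|P|)%:R <= (\sum_(p in P) #|agr p :\: Zall|)%N%:R.
  rewrite -sum1_card !natr_sum mulr_sumr; apply: ler_sum => p Pp; rewrite mulr1; exact: Hp.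
have Hexch : (\sum_(p in P) #|agr p :\: Zall| <=
     \sum_i (if i \notin Zall then \sum_(s in S i) #|[set p in P | p 0%R i == s]| else 0))%N.
  have E : forall p, #|agr p :\: Zall| = (\sum_i (i \in agr p :\: Zall : nat))%N.
    by move=> p; rewrite -sum1_card big_mkcond; apply: eq_bigr => i _; case: (i \in _).
  under eq_bigr => p _ do rewrite E.
  rewrite exchange_big /=; apply: leq_sum => i _.
  case: ifP => iZ.
    apply: leq_trans (card_bigcup_le (B := [set p in P | p 0 i \in S i]) _) .
      rewrite -sum1_card big_mkcond /= [X in (_ <= X)%N]big_mkcond /=.
      apply: leq_sum => p _; rewrite in_setD iZ /= !inE.
      by case: (((p - y) <= U)%MS && _) => //=; case: (p 0 i \in S i).
    move=> p; rewrite inE => /andP [Pp Hpi]; exists (p 0 i) => //.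
    by rewrite inE Pp eqxx.
  rewrite big1 // => p _; by rewrite in_setD iZ.
have Hterm : forall i s, i \notin Zall -> (#|[set p in P | p 0 i == s]|)%:R <= Dr ^+ r.-1.
  move=> i s iZ.
  case: (set_0Vmem [set p in P | p 0 i == s]) => [-> | [p0 Hp0]].
    by rewrite cards0 exprn_ge0.
  set Ui := (U :&: kermx (delta_mx i 0 : 'M[F]_(n,1)))%MS.
  have sUi : (Ui <= U)%MS := capmxSl _ _.
  have rUi : (\rank Ui < r)%N.
    rewrite -rU; have [le eqiff] := mxrank_leqif_sup sUi.
    rewrite ltn_neqAle le andbT eqiff; apply/negP => HU.
    have : (U <= kermx (delta_mx i 0 : 'M[F]_(n,1)))%MS := submx_trans HU (capmxSr _ _).
    move/sub_kermxP; rewrite -colE => Hc.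
    by move: iZ; rewrite inE Hc eqxx.
  apply: (le_trans _ (le_trans (IH _ rUi _ Ui erefl (submx_trans sUi sU) p0) _)); last first.
    by apply: ler_weXn2l => //; rewrite -ltnS prednK.
  rewrite ler_nat; apply: subset_leq_card; apply/subsetP => p.
  move: Hp0; rewrite !inE => /andP [/andP [Hy0 _] /eqP H0s] /andP [/andP [Hy Ht] /eqP Hps].
  rewrite Ht andbT sub_capmx; apply/andP; split.
    have -> : p - p0 = (p - y) + - (p0 - y) by rewrite opprB addrA subrK.
    by apply: addmx_sub => //; rewrite eqmx_opp.
  apply/sub_kermxP; rewrite -colE; apply/matrixP => a b.
  by rewrite !mxE (ord1 a) Hps H0s subrr.
have H3 : ((\sum_i (if i \notin Zall then \sum_(s in S i) #|[set p in P | p 0%R i == s]| else 0))%N)%:R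
    <= (n * l)%:R * Dr ^+ r.-1.
  rewrite natr_sum.
  apply: (@le_trans _ _ (\sum_(i < n) (l%:R * Dr ^+ r.-1))); last first.
    by rewrite sumr_const card_ord natrM -mulrA -[X in X <= _]mulr_natl.
  apply: ler_sum => i _; case: ifP => iZ; last by rewrite mulr_ge0 // exprn_ge0.
  rewrite natr_sum; apply: (@le_trans _ _ (\sum_(s in S i) Dr ^+ r.-1)).
    by apply: ler_sum => s _; exact: Hterm.
  rewrite sumr_const -[X in X <= _]mulr_natl; apply: ler_wpM2r; [exact: exprn_ge0 | rewrite ler_nat; exact: HS].
have H4 : g * (#|P|)%:R <= (n * l)%:R * Dr ^+ r.-1.
  by apply: le_trans Hsum (le_trans _ H3); rewrite ler_nat.
rewrite -(prednK rpos) exprS /Dr mulrAC ler_pdivlMr // mulrC; exact: H4.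
Qed.
End Affine.

Lemma card_box (F : finType) n (T : 'I_n -> {set F}) :
  #|[set v : 'rV[F]_n | [forall i, v 0 i \in T i]]| = (\prod_i #|T i|)%N.
Proof.
pose f (v : 'rV[F]_n) : {ffun 'I_n -> F} := [ffun i => v 0 i].
have finj : injective f.
  move=> u v /ffunP E; apply/rowP => i; have := E i; rewrite !ffunE => ->.
  done.
rewrite -(card_imset _ finj).
have -> : (\prod_i #|T i| = #|(family (fun i => mem (T i)) : simpl_pred {ffun 'I_n -> F})|)%N.
  rewrite card_family /image_mem. rewrite -(big_map _ xpredT (fun x => x)). rewrite foldrE. rewrite big_map. rewrite -big_enum /=.
  by rewrite big_map; apply: eq_big_seq => i; rewrite enumT.
apply: eq_card => g; apply/imsetP/familyP => [[v] | Hg].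
  rewrite inE => /forallP Hv -> i; rewrite ffunE; exact: Hv.
exists (\row_i g i); first by rewrite inE; apply/forallP => i; rewrite mxE; exact: Hg.
by apply/ffunP => i; rewrite !ffunE mxE.
Qed.



Lemma row_free_rowsub (F : fieldType) p n d (W : 'M[F]_(p, n)) (f : 'I_d -> 'I_p) :
  row_free W -> injective f -> row_free (rowsub f W).
Proof.
move=> /row_freeP [B WB] finj; apply/row_freeP.
exists (B *m (rowsub f (1%:M : 'M[F]_p))^T).
rewrite rowsubE -mulmxA (mulmxA W) WB mul1mx.
apply/matrixP => i j; rewrite !mxE.
rewrite (bigD1 (f i)) //= big1 => [|a ai]; last by rewrite !mxE eq_sym (negbTE ai) mul0r.
rewrite !mxE eqxx mul1r addr0 (inj_eq finj).
by rewrite eq_sym.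
Qed.

Lemma card_rows (F : finType) d n (B : {set 'rV[F]_n}) :
  (#|[set T : 'M[F]_(d, n) | [forall i, row i T \in B]]| <= #|B| ^ d)%N.
Proof.
pose f (T : 'M[F]_(d, n)) : {ffun 'I_d -> 'rV[F]_n} := [ffun i => row i T].
have finj : injective f.
  move=> T1 T2 /ffunP E; apply/row_matrixP => i; have := E i; rewrite !ffunE.
  done.
rewrite -(card_imset _ finj) -[X in (_ <= _ ^ X)%N]card_ord -card_ffun_on.
apply: subset_leq_card; apply/subsetP => x /imsetP [T]; rewrite inE => /forallP HT ->.
by apply/ffun_onP => i; rewrite ffunE; exact: HT.
Qed.

Lemma bin_le_exp a b : ('C(a, b) <= a ^ b)%N.
Proof.
apply: (@leq_trans ('C(a, b) * b`!)); first by rewrite leq_pmulr ?fact_gt0.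
rewrite bin_ffact ffact_prod -[X in (_ <= _ ^ X)%N](card_ord b) -prod_nat_const.
by apply: leq_prod => i _; exact: leq_subr.
Qed.

Lemma card_Sset (F : finType) n l :
  (#|[set S : {ffun 'I_n -> {set F}} | [forall i, #|S i| == l]]| <= (#|F| ^ l) ^ n)%N.
Proof.
apply: (@leq_trans (#|[set A : {set F} | #|A| == l]| ^ n)); last first.
  rewrite card_draws; case: n => [|n']; first by rewrite !expn0.
  by rewrite leq_exp2r //; exact: bin_le_exp.
rewrite -[X in (_ <= _ ^ X)%N]card_ord -card_ffun_on.
apply: subset_leq_card; apply/subsetP => S; rewrite inE => /forallP HS.
by apply/ffun_onP => i; rewrite inE; exact: HS.
Qed.

Lemma card_agr_le (F : finFieldType) n (S : 'I_n -> {set F}) (P : {pred {set 'I_n}}) :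
  (#|[set v : 'rV[F]_n | P (agr S v)]| <=
    \sum_(A in P) \prod_i (if i \in A then #|S i| else #|F|))%N.
Proof.
apply: (@leq_trans (\sum_(A in P)
   #|[set v : 'rV[F]_n | [forall i, v 0%R i \in (if i \in A then S i else setT)]]|)%N).
  apply: card_bigcup_le => v; rewrite inE => Pv; exists (agr S v) => //.
  rewrite inE; apply/forallP => i; case: ifP => iA; last by rewrite inE.
  by move: iA; rewrite inE.
apply: leq_sum => A _; rewrite card_box; apply: leq_prod => i _.
by case: ifP => // _; rewrite cardsT.
Qed.

Lemma prod_if n (A : {set 'I_n}) a b :
  (\prod_i (if i \in A then a else b) = a ^ #|A| * b ^ (n - #|A|))%N.
Proof.
rewrite (bigID (mem A)) /=.
rewrite [X in (X * _)%N](eq_bigr (fun=> a)); last by move=> i ->.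
rewrite [X in (_ * X)%N](eq_bigr (fun=> b)); last by move=> i iA; rewrite (negbTE iA).
rewrite !prod_nat_const; congr (_ * _ ^ _)%N.
by rewrite -[X in (X - _)%N](card_ord n) -(cardC (mem A)) addKn.
Qed.

Lemma card_sets_le n : (#|{: {set 'I_n}}| <= 2 ^ n)%N.
Proof.
have := card_powerset [set: 'I_n]; rewrite cardsT card_ord => <-.
apply: subset_leq_card; apply/subsetP => A _; by rewrite powersetE subsetT.
Qed.

Lemma natX_expR (R : realType) a m : (0 < a)%N ->
  ((a ^ m)%N)%:R = expR (m%:R * ln (a%:R : R)) :> R.
Proof.
move=> a0; rewrite expRM_natl lnK ?natrX // posrE ltr0n //.
Qed.

Lemma card_Gcontain (F : finFieldType) n k d (T : 'M[F]_(d, n)) : row_free T ->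
  (#|[set G : 'M[F]_(n, k) | (T <= G^T)%MS]| <= #|F| ^ (d * k) * #|F| ^ (n * (k - d)))%N.
Proof.
move=> fT; apply: leq_trans (card_contain k fT).
rewrite -(card_imset _ (@trmx_inj _ n k)); apply: subset_leq_card.
apply/subsetP => H /imsetP [G]; rewrite !inE => HG ->; exact: HG.
Qed.

Theorem theorem3p1 (R : realType) (F : finFieldType) (r eps : R) (l n k : nat) :
  0 < r -> r < 1 -> 0 < eps -> 0 < 1 - r - eps -> (0 < l)%N ->
  l%:R `^ (8 * r / eps + 6) <= (#|F|)%:R ->
  l%:R * 2 `^ (4 / eps) <= (#|F|)%:R ->
  k%:R = r * n%:R ->
  1 - 2 * (#|F|)%:R `^ (- (eps * n%:R / 8)) <=
  (#|[set G : 'M[F]_(n, k) |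
       list_recoverable (1 - r - eps) l ((2 * l%:R / eps) `^ (2 * l%:R / eps))
         (col_span_code G)]|)%:R
  / (#|{: 'M[F]_(n, k)}|)%:R.
Proof.
move=> r0 r1 e0 rho0 l0 hq1 hq2 hk.
have q_gt1 := card_finNzRing_gt1 F.
have q0 : (0 < #|F|)%N by apply: ltnW.
set Q : R := (#|F|)%:R.
have Qpos : 0 < Q by rewrite ltr0n.
have Qge1 : 1 <= Q by rewrite ler1n; apply: ltnW.
have Hall : (#|{: 'M[F]_(n, k)}|)%:R = Q ^+ (n * k) :> R by rewrite card_mx natrX.
have Hall0 : 0 < Q ^+ (n * k) by rewrite exprn_gt0.
case: (posnP n) => [n0 | npos].
  rewrite n0 mulr0 mul0r oppr0 powRr0 mulr1.
  apply: le_trans (_ : 0 <= _); first lra.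
  by rewrite divr_ge0.
set D0 := 2 * l%:R / eps.
set L := D0 `^ D0.
set tR := (r + eps) * n%:R.
set z0 := (r + eps / 2) * n%:R.
set g := eps * n%:R / 2.
set d := (Num.truncn D0).+1.
set Sset := [set S : {ffun 'I_n -> {set F}} | [forall i, #|S i| == l]].
set Brow := fun S : {ffun 'I_n -> {set F}} => [set v : 'rV[F]_n | tR <= (#|agr S v|)%:R].
set Bad1 := [set G : 'M[F]_(n, k) | [exists v : 'rV[F]_n,
   [&& (v <= G^T)%MS, v != 0 & z0 <= (#|zeros v|)%:R]]].
set Bad2 := [set G : 'M[F]_(n, k) | [exists S in Sset, exists T : 'M[F]_(d, n),
   [&& row_free T, [forall i, row i T \in Brow S] & (T <= G^T)%MS]]].
set Good := [set G : 'M[F]_(n, k) | list_recoverable (1 - r - eps) l L (col_span_code G)].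
have HA : forall G, G \notin Bad1 -> G \notin Bad2 -> G \in Good.
  move=> G nB1 nB2.
  have Hdist : forall v : 'rV[F]_n, (v <= G^T)%MS -> v != 0 -> (#|zeros v|)%:R < z0.
    move=> v vG vn0; rewrite ltNge; apply/negP => Hz; move/negP: nB1; apply.
    by rewrite inE; apply/existsP; exists v; rewrite vG vn0 Hz.
  rewrite inE; apply/forallP => S; apply/implyP => /forallP HS.
  have HS' : forall i, (#|S i| <= l)%N by move=> i; rewrite (eqP (HS i)).
  set X := [set x in col_span_code G | in_lr_ball (1 - r - eps) S x].
  set Xr := [set v : 'rV[F]_n | (v <= G^T)%MS && (v \in Brow S)].
  have XXr : (#|X| <= #|Xr|)%N.
    rewrite -(card_imset _ (@trmx_inj _ n 1)); apply: subset_leq_card.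
    apply/subsetP => y /imsetP [x]; rewrite inE => /andP [xC xB] ->.
    rewrite inE; apply/andP; split.
      by move: xC => /imsetP [m _ ->]; rewrite trmx_mul submxMl.
    rewrite inE; move: xB; rewrite /in_lr_ball.
    have -> : agreement S x = agr S x^T by apply/setP => i; rewrite !inE mxE.
    by have -> : 1 - (1 - r - eps) = r + eps by ring.
  apply: le_trans (_ : (#|X|)%:R <= (#|Xr|)%:R) _; first by rewrite ler_nat.
  pose A := \matrix_(i < #|Xr|, j < n) (enum_val i : 'rV[F]_n) 0 j.
  have rowA : forall i, row i A = enum_val i.
    by move=> i; apply/rowP => j; rewrite !mxE.
  have inXr : forall i : 'I_#|Xr|, enum_val i \in Xr by move=> i; exact: enum_valP.
  have sA : (A <= G^T)%MS.
    by apply/row_subP => i; rewrite rowA; have := inXr i; rewrite inE => /andP [].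
  have Hg : 0 < g by rewrite /g; apply: divr_gt0 => //; apply: mulr_gt0 => //; rewrite ltr0n.
  have Hgap : z0 + g <= tR by rewrite /z0 /g /tR; lra.
  have DrE : (n * l)%:R / g = D0.
    rewrite /g /D0 natrM; field.
    by apply/andP; split; [rewrite lt0r_neq0 | rewrite pnatr_eq0 -lt0n].
  have D0ge1 : 1 <= D0.
    rewrite /D0 ler_pdivlMr // mul1r.
    have : (1 <= l%:R :> R) by rewrite ler1n.
    lra.
  have HD : 1 <= (n * l)%:R / g by rewrite DrE.
  case: (ltnP (\rank A) d) => [ltd | ged].
    have H1 : (#|Xr| <= #|aset S tR A 0|)%N.
      apply: subset_leq_card; apply/subsetP => v vX; rewrite inE subr0.
      have := vX; rewrite inE => /andP [_ vB]; rewrite inE in vB; rewrite vB andbT.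
      rewrite -(enum_rankK_in vX vX) -rowA; exact: row_sub.
    have Hb := affine_bound HS' Hdist Hg Hgap HD erefl sA 0.
    apply: le_trans (_ : _ <= (#|aset S tR A 0|)%:R) _; first by rewrite ler_nat.
    apply: le_trans Hb _; rewrite DrE.
    apply: le_trans (_ : D0 ^+ (Num.truncn D0) <= _).
      by apply: ler_weXn2l => //; rewrite -ltnS.
    rewrite -powR_mulrn; last by apply: le_trans D0ge1.
    apply: ler_powR => //; rewrite truncn_le; apply: le_trans D0ge1.
    exact: ler01.
  exfalso; move/negP: nB2; apply.
  rewrite inE; apply/existsP; exists S; rewrite inE; apply/andP; split.
    by apply/forallP.
  pose f := fun i : 'I_d => maxrankfun A (widen_ord ged i).
  apply/existsP; exists (rowsub f A); apply/and3P; split.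
  - have -> : rowsub f A = rowsub (widen_ord ged) (rowsub (maxrankfun A) A).
      by rewrite -rowsub_comp.
    apply: row_free_rowsub; first exact: maxrowsub_free.
    by move=> i j /(congr1 val) /= /val_inj.
  - apply/forallP => i; rewrite row_rowsub rowA.
    by have := inXr (f i); rewrite inE => /andP [].
  - apply: submx_trans sA; apply/row_subP => i; rewrite row_rowsub; exact: row_sub.

set lam := ln Q.
set mu := ln (l%:R : R).
set ka := ln (2 : R).
have lam0 : 0 <= lam by apply: ln_ge0.
have l1 : 1 <= l%:R :> R by rewrite ler1n.
have mu0 : 0 <= mu by apply: ln_ge0.
have ka0 : 0 <= ka by apply: ln_ge0; rewrite ler1n.
have lpos : 0 < l%:R :> R by rewrite ltr0n.
have hl1 : (8 * r / eps + 6) * mu <= lam.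
  have H : ln (l%:R `^ (8 * r / eps + 6)) <= lam by rewrite ler_ln ?posrE ?powR_gt0.
  by rewrite ln_powR in H.
have hl2 : mu + 4 / eps * ka <= lam.
  have H : ln (l%:R * 2 `^ (4 / eps)) <= lam by rewrite ler_ln ?posrE ?mulr_gt0 ?powR_gt0.
  by rewrite lnM ?posrE ?powR_gt0 // ln_powR in H.
have hA : (8 * r + 6 * eps) * mu <= eps * lam.
  have := ler_wpM2l (ltW e0) hl1.
  by have -> : eps * ((8 * r / eps + 6) * mu) = (8 * r + 6 * eps) * mu by field; rewrite lt0r_neq0.
have hB : eps * mu + 4 * ka <= eps * lam.
  have := ler_wpM2l (ltW e0) hl2.
  by have -> : eps * (mu + 4 / eps * ka) = eps * mu + 4 * ka by field; rewrite lt0r_neq0.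
have QexpE : forall x, Q `^ x = expR (x * lam).
  by move=> x; rewrite /powR (negbTE (lt0r_neq0 Qpos)).
have QnatE : forall m, Q ^+ m = expR (m%:R * lam).
  by move=> m; rewrite /Q -natrX natX_expR.
have k0 : (0 < k)%N.
  rewrite lt0n; apply/negP => /eqP k0.
  have : 0 < r * n%:R by apply: mulr_gt0 => //; rewrite ltr0n.
  by rewrite -hk k0 ltxx.
set e8 := Q `^ (- (eps * n%:R / 8)).
have HB1 : (#|Bad1|)%:R <= e8 * Q ^+ (n * k).
  set P1 : {pred {set 'I_n}} := [pred Z : {set 'I_n} | z0 <= (#|Z|)%:R].
  set Z1 := [set v : 'rV[F]_n | (v != 0) && (z0 <= (#|zeros v|)%:R)].
  have Hnat : (#|Bad1| <= (\sum_(Z in P1) #|F| ^ (n - #|Z|)) * (#|F| ^ (1 * k) * #|F| ^ (n * (k - 1))))%N.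
    apply: (@leq_trans (\sum_(v in Z1) #|[set G : 'M[F]_(n, k) | (v <= G^T)%MS]|)%N).
      apply: card_bigcup_le => G; rewrite inE => /existsP [v /and3P [vG vn0 vz]].
      by exists v; rewrite ?inE ?vn0 ?vz.
    apply: (@leq_trans (\sum_(v in Z1) (#|F| ^ (1 * k) * #|F| ^ (n * (k - 1))))%N).
      apply: leq_sum => v; rewrite inE => /andP [vn0 _]; apply: card_Gcontain.
      rewrite /row_free; have := rank_leq_row v.
      by rewrite leq_eqVlt ltnS leqn0 mxrank_eq0 (negbTE vn0) orbF.
    rewrite sum_nat_const leq_mul2r; apply/orP; right.
    apply: (@leq_trans #|[set v : 'rV[F]_n | P1 (agr (fun=> [set 0]) v)]|).
      apply: subset_leq_card; apply/subsetP => v; rewrite !inE => /andP [_ vz].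
      suff -> : agr (fun=> [set 0]) v = zeros v by [].
      by apply/setP => i; rewrite !inE.
    apply: leq_trans (card_agr_le _ _) _.
    apply: leq_sum => Z _; rewrite prod_if cards1 exp1n mul1n.
    done.
  apply: le_trans (_ : _ <= ((\sum_(Z in P1) #|F| ^ (n - #|Z|)) *
       (#|F| ^ (1 * k) * #|F| ^ (n * (k - 1))))%N%:R) _; first by rewrite ler_nat.
  rewrite natrM natr_sum.
  apply: le_trans (_ : (2 ^+ n * expR ((n%:R - z0) * lam)) * ((#|F| ^ (1 * k) * #|F| ^ (n * (k - 1)))%N)%:R <= _).
    apply: ler_wpM2r; first exact: ler0n.
    apply: le_trans (_ : \sum_(Z in P1) expR ((n%:R - z0) * lam) <= _).
      apply: ler_sum => Z; rewrite inE => Zz.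
      rewrite natX_expR // ler_expR; apply: ler_wpM2r => //.
      rewrite natrB; last by rewrite -[X in (_ <= X)%N](card_ord n) max_card.
      by rewrite lerB.
    rewrite sumr_const -[X in X <= _]mulr_natl; apply: ler_wpM2r; first exact: expR_ge0.
    rewrite -natrX ler_nat; apply: leq_trans (card_sets_le n).
    by apply: max_card.
  rewrite /e8 QexpE natrM !natrX -/Q !QnatE.
  have -> : (2 : R) ^+ n = expR (n%:R * ka) by rewrite -natX_expR // natrX.
  rewrite -!expRD ler_expR.
  rewrite mul1n !natrM natrB // hk /z0.
  have h1 : n%:R * (4 * ka) <= n%:R * (eps * lam).
    apply: ler_wpM2l; first exact: ler0n.
    have : 0 <= eps * mu by apply: mulr_ge0 => //; exact: ltW.
    lra.
  have h2 : 0 <= n%:R * (eps * lam) by apply: mulr_ge0; [exact: ler0n | apply: mulr_ge0 => //; exact: ltW].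
  nra.

have HB2 : (#|Bad2|)%:R <= e8 * Q ^+ (n * k).
  have He8 : 0 <= e8 * Q ^+ (n * k) by rewrite mulr_ge0 // ?powR_ge0 // exprn_ge0 // ltW.
  case: (ltnP k d) => [kd | dk].
    suff -> : Bad2 = set0 by rewrite cards0.
    apply/setP => G; rewrite in_set0; apply/negbTE/negP; rewrite inE.
    move=> /existsP [S /andP [_ /existsP [T /and3P [fT _ TG]]]].
    have := mxrankS TG; rewrite (eqP fT) => /leq_trans /(_ (rank_leq_row _)).
    by rewrite leqNgt kd.
  set Tset := fun S : {ffun 'I_n -> {set F}} =>
     [set T : 'M[F]_(d, n) | row_free T && [forall i, row i T \in Brow S]].
  set c := (#|F| ^ (d * k) * #|F| ^ (n * (k - d)))%N.
  have Hnat : (#|Bad2| <= \sum_(S in Sset) (#|Brow S| ^ d * c))%N.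
    apply: (@leq_trans (\sum_(S in Sset) #|[set G : 'M[F]_(n, k) |
         [exists T in Tset S, (T <= G^T)%MS]]|)%N).
      apply: card_bigcup_le => G; rewrite inE => /existsP [S /andP [SS /existsP [T /and3P [fT TB TG]]]].
      exists S => //; rewrite inE; apply/existsP; exists T; rewrite TG andbT inE fT.
      exact: TB.
    apply: leq_sum => S SS.
    apply: (@leq_trans (\sum_(T in Tset S) #|[set G : 'M[F]_(n, k) | (T <= G^T)%MS]|)%N).
      apply: card_bigcup_le => G; rewrite inE => /existsP [T /andP [TS TG]].
      by exists T => //; rewrite inE.
    apply: (@leq_trans (\sum_(T in Tset S) c)%N).
      apply: leq_sum => T; rewrite inE => /andP [fT _]; exact: card_Gcontain.
    rewrite sum_nat_const leq_mul2r; apply/orP; right.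
    apply: leq_trans (card_rows d (Brow S)).
    apply: subset_leq_card; apply/subsetP => T; rewrite !inE => /andP [_ ->].
    done.
  set EB := expR (tR * mu + (n%:R - tR) * lam).
  have mulam : mu <= lam.
    have : 0 <= 4 / eps * ka by apply: mulr_ge0 => //; apply: divr_ge0 => //; exact: ltW.
    lra.
  have HBrow : forall S, S \in Sset -> (#|Brow S|)%:R <= 2 ^+ n * EB.
    move=> S; rewrite inE => /forallP HS.
    set P : {pred {set 'I_n}} := [pred A : {set 'I_n} | tR <= (#|A|)%:R].
    have Hn : (#|Brow S| <= \sum_(A in P) (l ^ #|A| * #|F| ^ (n - #|A|)))%N.
      apply: leq_trans (_ : #|[set v : 'rV[F]_n | P (agr S v)]| <= _)%N.
        by apply: subset_leq_card; apply/subsetP => v; rewrite !inE.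
      apply: leq_trans (card_agr_le _ _) _; apply: leq_sum => A _.
      rewrite -prod_if; apply: leq_prod => i _.
      by case: ifP => // _; rewrite (eqP (HS i)).
    apply: le_trans (_ : (\sum_(A in P) (l ^ #|A| * #|F| ^ (n - #|A|)))%N%:R <= _).
      by rewrite ler_nat.
    rewrite natr_sum.
    apply: le_trans (_ : \sum_(A in P) EB <= _).
      apply: ler_sum => A; rewrite inE => HA'.
      rewrite natrM !natX_expR // -expRD ler_expR.
      rewrite natrB; last by rewrite -[X in (_ <= X)%N](card_ord n) max_card.
      rewrite -/mu -/Q -/lam.
      have : 0 <= ((#|A|)%:R - tR) * (lam - mu) by apply: mulr_ge0; lra.
      nra.
    rewrite sumr_const -[X in X <= _]mulr_natl; apply: ler_wpM2r; first exact: expR_ge0.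
    rewrite -natrX ler_nat; apply: leq_trans (card_sets_le n).
    by apply: max_card.
  have HSset : (#|Sset| <= (#|F| ^ l) ^ n)%N by apply: card_Sset.
  apply: le_trans (_ : (\sum_(S in Sset) (#|Brow S| ^ d * c))%N%:R <= _); first by rewrite ler_nat.
  rewrite natr_sum.
  apply: le_trans (_ : \sum_(S in Sset) ((2 ^+ n * EB) ^+ d * c%:R) <= _).
    apply: ler_sum => S SS; rewrite natrM natrX; apply: ler_wpM2r; first exact: ler0n.
    apply: lerXn2r; rewrite ?nnegrE ?ler0n //; last exact: HBrow.
    by apply: mulr_ge0; [apply: exprn_ge0 | apply: expR_ge0].
  rewrite sumr_const -[X in X <= _]mulr_natl.
  apply: le_trans (_ : ((#|F| ^ l) ^ n)%N%:R * ((2 ^+ n * EB) ^+ d * c%:R) <= _).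
    apply: ler_wpM2r; last by rewrite ler_nat.
    apply: mulr_ge0; last exact: ler0n.
    by apply: exprn_ge0; apply: mulr_ge0; [apply: exprn_ge0 | apply: expR_ge0].
  have dgt : D0 < d%:R by apply: truncnS_gt.
  have dd : 2 * l%:R < eps * d%:R.
    have := dgt; rewrite /D0 ltr_pdivrMr //; lra.
  have d1 : 1 <= d%:R :> R by rewrite ler1n.
  have hC : 8 * (r + eps) * mu + 8 * ka <= 3 * (eps * lam) by lra.
  have p1 : d%:R * (8 * (r + eps) * mu + 8 * ka) <= d%:R * (3 * (eps * lam)).
    by apply: ler_wpM2l => //; exact: ler0n.
  have p2 : lam * (2 * l%:R) <= lam * (eps * d%:R).
    by apply: ler_wpM2l => //; exact: ltW.
  have p3 : 0 <= (eps * lam) * (d%:R - 1).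
    by apply: mulr_ge0; [apply: mulr_ge0 => //; exact: ltW | lra].
  have HW : l%:R * lam + d%:R * ka + d%:R * (r + eps) * mu - d%:R * eps * lam <= - (eps * lam) / 8.
    lra.
  have HnW : n%:R * (l%:R * lam + d%:R * ka + d%:R * (r + eps) * mu - d%:R * eps * lam)
      <= n%:R * (- (eps * lam) / 8).
    by apply: ler_wpM2l => //; exact: ler0n.
  rewrite /e8 QexpE /c natrM !natrX -exprM /EB -/Q !QnatE.
  have -> : (2 : R) ^+ n = expR (n%:R * ka) by rewrite -natX_expR // natrX.
  rewrite -expRD -expRM_natl -!expRD ler_expR.
  rewrite !natrM natrB // hk /tR.
  lra.

have Hcount : (#|{: 'M[F]_(n, k)}| <= #|Good| + #|Bad1| + #|Bad2|)%N.
  rewrite -addnA -(cardsC Good) leq_add2l.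
  apply: leq_trans (leq_card_setU Bad1 Bad2).
  apply: subset_leq_card; apply/subsetP => G; rewrite in_setC in_setU => HG.
  case: (boolP (G \in Bad1)) => //= H1; case: (boolP (G \in Bad2)) => //= H2.
  by case/negP: HG; apply: HA.
rewrite Hall ler_pdivlMr //.
have : Q ^+ (n * k) <= (#|Good|)%:R + (#|Bad1|)%:R + (#|Bad2|)%:R.
  by rewrite -Hall -!natrD ler_nat.
rewrite -/Good.
lra.
Qed.
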